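(* Let $R=F/I$ be a standard algebra, where $F=k\langle x_1,\dots,x_n\rangle$ and $x_1,\dots,x_n$ is a basis of $R_1$. The following are equivalent: (i) $R$ is initially Koszul with Groebner flag $(x_1,\dots,x_n)$; (ii) $R$ is PBW with respect to the degree-lexicographical order with $x_1<\dots<x_n$ (i.e. the reduced Groebner basis $G$ of $I$ with respect to this order consists of quadratic elements), and the set $\mathrm{lm}\,G$ of leading monomials of $G$ has the property: if $x_kx_j\in\mathrm{lm}\,G$ then $x_kx_i\in\mathrm{lm}\,G$ for all $i<j$; (iii) the monomial algebra $R'=F/(\mathrm{lm}\,G)$ (with $G$ the reduced Groebner basis of $I$ for the same order) is initially Koszul with Groebner flag $(x_1,\dots,x_n)$.
   Context: A standard algebra $R$: graded, $R_0=k$, generated by $R_1$; $R_+=\bigoplus_{i>0}R_i$. For a basis $x_1,\dots,x_n$ of $R_1$ let $I_k=x_1R+\dots+x_kR$ ($I_0=0$). A Koszul filtration is a family $\mathbf F$ of right ideals such that: (1) each member is generated by elements of $R_1$; (2) $0,R_+\in\mathbf F$; (3) for every $0\ne I\in\mathbf F$ there exist $J\in\mathbf F$, $J\ne I$, and $x\in R_1$ with $I=J+xR$ and $(J:x)=\{a\in R: xa\in J\}\in\mathbf F$. $R$ is initially Koszul with Groebner flag $(x_1,\dots,x_n)$ if the family $\{I_0,I_1,\dots,I_n\}$ is itself a Koszul filtration; equivalently, for each $1\le k\le n$ the right ideal $\{a\in R: x_ka\in I_{k-1}\}$ equals $I_j$ for some $j$. *)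

(* Defs.v *)
From HB Require Import structures.
From mathcomp Require Import all_boot all_order all_algebra.
From mathcomp Require Import finmap.
From mathcomp.multinomials Require Import monalg.

Set Implicit Arguments.
Unset Strict Implicit.
Unset Printing Implicit Defensive.

Import Order.TTheory GRing.Theory.
Local Open Scope ring_scope.

(* The free associative algebra F = k<x_1,...,x_n> : the monoid algebra over
   k of the free monoid {fmonom 'I_n} on the letters 'I_n = {0,...,n-1};
   the letter i : 'I_n stands for the variable x_(i+1). *)
Notation freealg k n := {malg k[{fmonom 'I_n}]}.

Section FreeAlgebra.
Variables (k : fieldType) (n : nat).
Local Notation F := (freealg k n).
Local Notation word := (seq 'I_n).

Definition mono (w : word) : F := << FMonom w >>.
Definition var (i : 'I_n) : F := mono [:: i].

Definition is_ideal (I : F -> Prop) : Prop :=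
  [/\ I 0,
      (forall a b, I a -> I b -> I (a + b)) &
      (forall a b c, I b -> I (a * b * c))].

Definition hcomp (d : nat) (f : F) : F :=
  \sum_(m <- msupp f | size (m : word) == d) << f@_m *g m >>.

Definition homogeneous_ideal (I : F -> Prop) : Prop :=
  forall f d, I f -> I (hcomp d f).

(* R = F/I is a standard algebra in which x_1,...,x_n is a basis of R_1:
   I is a homogeneous two-sided ideal contained in F_{>=2}. *)
Definition standard_ideal (I : F -> Prop) : Prop :=
  [/\ is_ideal I, homogeneous_ideal I &
      forall f, I f -> forall m, m \in msupp f -> (2 <= size (m : word))%N].

(* preimage in F of the right ideal x_1 R + ... + x_j R of R = F/I *)
Definition flag (I : F -> Prop) (j : nat) (f : F) : Prop :=
  exists g (c : 'I_n -> F),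
    I g /\ f = g + \sum_(i < n | (i < j)%N) var i * c i.

(* R = F/I is initially Koszul with Groebner flag (x_1,...,x_n): for each
   1 <= k <= n, (I_(k-1) : x_k) = I_j for some j.  (Here k-1 = i, x_k = var i;
   right ideals of R are compared through their preimages in F.) *)
Definition initially_koszul (I : F -> Prop) : Prop :=
  forall i : 'I_n, exists2 j, (j <= n)%N &
    forall a : F, flag I i (var i * a) <-> flag I j a.

Fixpoint lexlt (u v : word) : bool :=
  match u, v with
  | x :: u', y :: v' => ((x < y)%N || ((x == y) && lexlt u' v'))
  | _, _ => false
  end.

Definition deglt (u v : word) : bool :=
  (size u < size v)%N || ((size u == size v) && lexlt u v).

Definition lm (f : F) : word :=
  foldr (fun (m : {fmonom 'I_n}) (acc : word) =>
           if deglt acc m then (m : word) else acc) [::] (msupp f).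

Definition lc (f : F) : k := f@_(FMonom (lm f)).

Definition wdivides (u w : word) : Prop := exists a b, w = a ++ u ++ b.

Definition reduced_GB (I G : F -> Prop) : Prop :=
  [/\ forall g, G g -> I g,
      forall g, G g -> g != 0 /\ lc g = 1,
      forall f, I f -> f != 0 -> exists2 g, G g & wdivides (lm g) (lm f) &
      forall g g', G g -> G g' -> g <> g' ->
        forall m, m \in msupp g -> ~ wdivides (lm g') m].

Definition quadratic (g : F) : Prop :=
  forall m, m \in msupp g -> size (m : word) = 2%N.

Definition PBW_lm_condition (G : F -> Prop) : Prop :=
  (forall g, G g -> quadratic g) /\
  (forall a b c : 'I_n, (c < b)%N ->
     (exists2 g, G g & lm g = [:: a; b]) ->
     exists2 g, G g & lm g = [:: a; c]).

Definition ideal_gen (S : F -> Prop) (f : F) : Prop :=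
  exists l : seq (F * F * F),
    (forall t, t \in l -> S t.1.2) /\ f = \sum_(t <- l) t.1.1 * t.1.2 * t.2.

Definition lm_ideal (G : F -> Prop) : F -> Prop :=
  ideal_gen (fun f => exists2 g, G g & f = mono (lm g)).

End FreeAlgebra.

(* Main.v *)
Require Import Defs.
From HB Require Import structures.
From mathcomp Require Import all_boot all_order all_algebra.
From mathcomp Require Import finmap.
From mathcomp.multinomials Require Import monalg.
From mathcomp Require Import zify.
From Stdlib Require Import Classical.

Set Implicit Arguments.
Unset Strict Implicit.
Unset Printing Implicit Defensive.
Import Order.TTheory GRing.Theory.
Local Open Scope ring_scope.

Section Basics.
Variables (k : fieldType) (n : nat).
Local Notation F := (freealg k n).
Local Notation word := (seq 'I_n).
Local Notation coef f w := (mcoeff (FMonom w) f).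

Lemma FM_eq (u w : word) : (FMonom u == FMonom w) = (u == w).
Proof. by []. Qed.

Lemma fm_eqv (m : {fmonom 'I_n}) (w : word) : (m == FMonom w) = ((m : word) == w).
Proof. by case: m. Qed.

Lemma malg_ext (f g : F) : (forall w, coef f w = coef g w) -> f = g.
Proof. by move=> H; apply/malgP => m; rewrite -[m]fmK H. Qed.

Lemma sum_coefU (s : seq {fmonom 'I_n}) (c : {fmonom 'I_n} -> k) x :
  uniq s -> \sum_(m <- s) c m *+ (m == x) = if x \in s then c x else 0.
Proof.
elim: s => [|m s IH] /=; first by rewrite big_nil.
case/andP=> ms us; rewrite big_cons IH // in_cons.
case: (eqVneq m x) => [<-|mx] /=; first by rewrite (negPf ms) addr0.
by rewrite add0r.
Qed.

Lemma sum_supp (f : F) x : \sum_(m <- msupp f) f@_m *+ (m == x) = f@_x.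
Proof.
rewrite sum_coefU ?fset_uniq //; case: ifP => // /negbT /mcoeff_outdom ->.
by [].
Qed.

Lemma coef_mono (u w : word) : coef (mono k u) w = (u == w)%:R.
Proof. by rewrite /mono mcoeffU1. Qed.

Lemma mulmE (m1 m2 : {fmonom 'I_n}) : mmul m1 m2 = FMonom (m1 ++ m2).
Proof. exact: fmmulE. Qed.

Lemma mono_mul (u v : word) : mono k u * mono k v = mono k (u ++ v).
Proof. by rewrite /mono malgM_def fgmulUU mulr1 mulmE. Qed.

Lemma coef_monoM (u : word) (f : F) w :
  coef (mono k u * f) w = \sum_(m <- msupp f) f@_m *+ (u ++ m == w).
Proof.
rewrite mcoeffMl /mono msuppU1 big_seq_fset1; apply: eq_bigr => m _.
by rewrite mcoeffUU mul1r mulmE FM_eq.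
Qed.

Lemma coef_monoM_cat (u v : word) (f : F) :
  coef (mono k u * f) (u ++ v) = coef f v.
Proof.
rewrite coef_monoM -sum_supp; apply: eq_bigr => m _.
by rewrite eqseq_cat // eqxx fm_eqv.
Qed.

Lemma coef_varM_nil (c : 'I_n) (f : F) : coef (var k c * f) [::] = 0.
Proof. by rewrite coef_monoM big1. Qed.

Lemma coef_varM_cons (c j : 'I_n) (f : F) w :
  coef (var k c * f) (j :: w) = if c == j then coef f w else 0.
Proof.
case: eqP => [<-|cj]; first exact: (coef_monoM_cat [:: c]).
by rewrite coef_monoM big1 // => m _ /=; rewrite eqseq_cons; case: eqP.
Qed.

Definition supp_in (P : word -> Prop) (f : F) := forall w, coef f w != 0 -> P w.

Lemma supp_in0 P : supp_in P 0.
Proof. by move=> w; rewrite mcoeff0 eqxx. Qed.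

Lemma supp_inD P f g : supp_in P f -> supp_in P g -> supp_in P (f + g).
Proof.
move=> Hf Hg w; rewrite mcoeffD.
case: (eqVneq (coef f w) 0) => [->|/Hf//]; rewrite add0r; exact: Hg.
Qed.

Lemma supp_inZ P c f : supp_in P f -> supp_in P (c *: f).
Proof. by move=> Hf w; rewrite mcoeffZ mulf_eq0 negb_or => /andP[_ /Hf]. Qed.

Lemma supp_inN P f : supp_in P f -> supp_in P (- f).
Proof. by move=> Hf w; rewrite mcoeffN oppr_eq0 => /Hf. Qed.

Lemma supp_inB P f g : supp_in P f -> supp_in P g -> supp_in P (f - g).
Proof. by move=> Hf Hg; apply: supp_inD => //; apply: supp_inN. Qed.

Lemma supp_in_sum P (I : Type) (r : seq I) (Q : pred I) (Fi : I -> F) :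
  (forall i, Q i -> supp_in P (Fi i)) -> supp_in P (\sum_(i <- r | Q i) Fi i).
Proof.
move=> H; apply: (big_rec (fun x => supp_in P x)); first exact: supp_in0.
by move=> i x Qi Hx; apply: supp_inD => //; apply: H.
Qed.

Lemma supp_in_mono P w : P w -> supp_in P (mono k w).
Proof. by move=> Pw v; rewrite coef_mono; case: (eqVneq w v) => [<-|_] //; rewrite eqxx. Qed.

Lemma supp_in_impl (P Q : word -> Prop) f :
  (forall w, P w -> Q w) -> supp_in P f -> supp_in Q f.
Proof. by move=> H Hf w /Hf /H. Qed.

Lemma monoU_scale (c : k) (m : {fmonom 'I_n}) : << c *g m >> = c *: mono k m.
Proof.
by rewrite /mono fmK -mul_malgC malgM_def fgmulUU mulr1 mul1m.
Qed.

Lemma span_ind (P : word -> Prop) (Q : F -> Prop) :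
  Q 0 -> (forall f g, Q f -> Q g -> Q (f + g)) ->
  (forall c f, Q f -> Q (c *: f)) -> (forall w, P w -> Q (mono k w)) ->
  forall f, supp_in P f -> Q f.
Proof.
move=> Q0 QD QZ Qm f Hf; rewrite (monalgE f) big_seq.
apply: (big_rec (fun x => Q x)) => // m x mf Qx; apply: QD => //.
rewrite monoU_scale; apply: QZ; apply: Qm; apply: Hf.
by rewrite fmK mcoeff_neq0.
Qed.

Lemma supp_in_all (f : F) : supp_in (fun _ => True) f.
Proof. by []. Qed.

Lemma supp_none (f : F) : supp_in (fun _ => False) f -> f = 0.
Proof.
move=> H; apply: malg_ext => w; rewrite mcoeff0.
by case: (eqVneq (coef f w) 0) => // /H.
Qed.

End Basics.

Section Orders.
Variable (n : nat).
Local Open Scope nat_scope.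
Local Notation word := (seq 'I_n).

Lemma lexlt_irr (u : word) : lexlt u u = false.
Proof. by elim: u => //= x u ->; rewrite ltnn eqxx. Qed.

Lemma lexlt_trans (u v w : word) : lexlt u v -> lexlt v w -> lexlt u w.
Proof.
elim: u v w => [|x u IH] [|y v] [|z w] //=.
case/orP=> [xy|/andP[/eqP exy uv]]; case/orP=> [yz|/andP[/eqP eyz vw]].
- by rewrite (ltn_trans xy yz).
- by rewrite -eyz xy.
- by rewrite exy yz.
- by rewrite exy eyz eqxx (IH _ _ uv vw) orbT.
Qed.

Lemma lexlt_total (u v : word) : size u = size v -> u != v ->
  lexlt u v || lexlt v u.
Proof.
elim: u v => [|x u IH] [|y v] //= [] suv.
rewrite eqseq_cons; case: (ltngtP x y) => xy //=; first by rewrite orbT.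
have exy : x = y by apply: val_inj.
by rewrite exy eqxx /= => /(IH _ suv).
Qed.

Lemma lexlt_catr (a b v : word) : lexlt a b -> lexlt (a ++ v) (b ++ v).
Proof.
elim: a b => [|x a IH] [|y b] //=.
by case/orP=> [->//|/andP[-> /IH ->]]; rewrite orbT.
Qed.

Lemma lexlt_catl (u a b : word) : lexlt (u ++ a) (u ++ b) = lexlt a b.
Proof. by elim: u => //= x u ->; rewrite ltnn eqxx. Qed.

Lemma deglt_irr (u : word) : deglt u u = false.
Proof. by rewrite /deglt ltnn lexlt_irr andbF. Qed.

Lemma deglt_size (u v : word) : deglt u v -> size u <= size v.
Proof. by case/orP=> [/ltnW//|/andP[/eqP-> _]]. Qed.

Lemma deglt_trans (u v w : word) : deglt u v -> deglt v w -> deglt u w.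
Proof.
rewrite /deglt; case/orP=> [uv|/andP[/eqP suv luv]];
  case/orP=> [vw|/andP[/eqP svw lvw]].
- by rewrite (ltn_trans uv vw).
- by rewrite -svw uv.
- by rewrite suv vw.
- by rewrite suv svw eqxx (lexlt_trans luv lvw) orbT.
Qed.

Lemma deglt_asym (u v : word) : deglt u v -> deglt v u = false.
Proof.
move=> uv; apply/negP => vu; have := deglt_trans uv vu.
by rewrite deglt_irr.
Qed.

Lemma deglt_total (u v : word) : u != v -> deglt u v || deglt v u.
Proof.
move=> neq; rewrite /deglt; case: (ltngtP (size u) (size v)) => //= suv.
exact: lexlt_total.
Qed.

Lemma deglt_ctx (u m m' v : word) : deglt m m' -> deglt (u ++ m ++ v) (u ++ m' ++ v).
Proof.
rewrite /deglt !size_cat; case/orP=> [lt|/andP[/eqP e l]].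
  by rewrite ltn_add2l ltn_add2r lt.
by rewrite e eqxx lexlt_catl lexlt_catr // orbT.
Qed.

Lemma deglt_nil (u : word) : deglt u [::] = false.
Proof. by rewrite /deglt ltn0; case: u. Qed.

Lemma deglt2 (a' b' a b : 'I_n) : deglt [:: a'; b'] [:: a; b] ->
  (a' < a)%N \/ (a' = a /\ (b' < b)%N).
Proof.
rewrite /deglt /= andbF orbF; case/orP=> [->|/andP[/eqP -> ->]]; first by left.
by right.
Qed.

Lemma deglt_head (x y : 'I_n) (u v : word) : size u = size v ->
  deglt (x :: u) (y :: v) -> (x <= y)%N.
Proof.
move=> s; rewrite /deglt /= s ltnn eqxx /=.
by case/orP=> [/ltnW|/andP[/eqP -> _]].
Qed.

(* encoding for well-foundedness *)
Fixpoint enc (w : word) : nat :=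
  match w with [::] => 0 | x :: u => x.+1 * n.+1 ^ size u + enc u end.

Lemma enc_lt (w : word) : (enc w < n.+1 ^ size w)%N.
Proof.
elim: w => //= x u IH; rewrite expnS.
have hx : (x.+1 <= n)%N by apply: ltn_ord.
have hx' : x.+2 <= n.+1 by [].
have := leq_mul hx' (leqnn (n.+1 ^ size u)).
rewrite mulSn; lia.
Qed.

Lemma enc_ge (x : 'I_n) (u : word) : (n.+1 ^ size u <= enc (x :: u))%N.
Proof. rewrite /=; have := leq_mul (ltn0Sn x) (leqnn (n.+1 ^ size u)); lia. Qed.

Lemma lexlt_enc (u v : word) : size u = size v -> lexlt u v -> (enc u < enc v)%N.
Proof.
elim: u v => [|x u IH] [|y v] //= [] s; rewrite s.
case/orP=> [xy|/andP[/eqP -> uv]]; last by rewrite ltn_add2l IH.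
have h1 := enc_lt u; rewrite s in h1.
have h2 : x.+2 <= y.+1 by [].
have := leq_mul h2 (leqnn (n.+1 ^ size v)).
rewrite mulSn; lia.
Qed.

Lemma deglt_enc (u v : word) : deglt u v -> (enc u < enc v)%N.
Proof.
case/orP=> [suv|/andP[/eqP s l]]; last exact: lexlt_enc.
case: v suv => [|y v] suv; first by rewrite ltn0 in suv.
apply: (leq_trans (enc_lt u)); apply: leq_trans (enc_ge y v).
exact: leq_pexp2l.
Qed.

Lemma deglt_ind (P : word -> Prop) :
  (forall w, (forall u, deglt u w -> P u) -> P w) -> forall w, P w.
Proof.
move=> H w; have [N] := ubnP (enc w); elim: N w => // N IH w lt.
apply: H => u /deglt_enc uw; apply: IH; exact: leq_trans uw _.
Qed.

Definition wdiv_size (u w : word) : wdivides u w -> (size u <= size w)%N.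
Proof. by case=> a [b ->]; rewrite !size_cat; lia. Qed.

Lemma wdiv_eq (u w : word) : wdivides u w -> (size w <= size u)%N -> u = w.
Proof.
case=> a [b ->]; rewrite !size_cat => h.
have /eqP: size a = 0%N by lia.
have /eqP: size b = 0%N by lia.
by rewrite !size_eq0 => /eqP-> /eqP->; rewrite cats0.
Qed.

Lemma wdiv_trans (u v w : word) : wdivides u v -> wdivides v w -> wdivides u w.
Proof.
case=> a [b ->] [c [d ->]]; exists (c ++ a), (b ++ d).
by rewrite !catA.
Qed.

Lemma wdiv_refl (u : word) : wdivides u u.
Proof. by exists [::], [::]; rewrite cats0. Qed.

End Orders.

Section LM.
Variables (k : fieldType) (n : nat).
Local Notation F := (freealg k n).
Local Notation word := (seq 'I_n).
Local Notation coef f w := (mcoeff (FMonom w) f).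

Lemma lm_fold (s : seq {fmonom 'I_n}) :
  let acc := foldr (fun (m : {fmonom 'I_n}) (acc : word) =>
           if deglt acc m then (m : word) else acc) [::] s in
  ((acc == [::]) || (acc \in map (fun m : {fmonom 'I_n} => (m : word)) s)) /\
  forall m, m \in s -> ((m : word) = acc \/ deglt m acc).
Proof.
elim: s => [|m s [IH1 IH2]] /=; first by split.
set acc := foldr _ _ s in IH1 IH2 *.
case: ifP => [lt|nlt].
  split; first by rewrite in_cons eqxx orbT.
  move=> m'; rewrite in_cons => /orP[/eqP->|/IH2 [e|lt']]; first by left.
    by right; rewrite e.
  by right; apply: deglt_trans lt.
split.
  case/orP: IH1 => [->//|H]; by rewrite in_cons H !orbT.
move=> m'; rewrite in_cons => /orP[/eqP->|/IH2 //].
case: (eqVneq (m : word) acc) => [->|ne]; first by left.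
by have := deglt_total ne; rewrite nlt orbF => ->; right.
Qed.

Lemma lm_max (f : F) w : coef f w != 0 -> w = lm f \/ deglt w (lm f).
Proof.
rewrite mcoeff_neq0 => H; have [_ H2] := lm_fold (msupp f).
exact: (H2 _ H).
Qed.

Lemma lm_in (f : F) : f != 0 -> coef f (lm f) != 0.
Proof.
move=> f0; have [H1 H2] := lm_fold (msupp f); rewrite -/(lm f) in H1 H2.
have [m mf] : exists m, m \in msupp f.
  by apply/fset0Pn; rewrite msupp_eq0.
case/orP: H1 => [/eqP e|/mapP [m' m'f ->]]; last by rewrite fmK mcoeff_neq0.
case: (H2 _ mf) => [em|]; last by rewrite e deglt_nil.
by rewrite -em fmK mcoeff_neq0.
Qed.

Lemma lm_eq (f : F) w : coef f w != 0 ->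
  (forall w', coef f w' != 0 -> w' = w \/ deglt w' w) -> lm f = w.
Proof.
move=> fw H.
have f0 : f != 0 by apply: contraNneq fw => ->; rewrite mcoeff0.
case: (lm_max fw) => [->//|lt].
case: (H _ (lm_in f0)) => [//|lt'].
by rewrite (deglt_asym lt) in lt'.
Qed.

Lemma mulr_malgC (x : F) (c : k) : x * c%:MP = c *: x.
Proof.
rewrite malgM_def fgmulgU malgZ_def /fgscale; apply: eq_bigr => m _.
by rewrite mulm1 mulrC.
Qed.

Lemma scalerAr_malg (a : k) (x y : F) : a *: (x * y) = x * (a *: y).
Proof. by rewrite -[in RHS]mul_malgC mulrA mulr_malgC scalerAl. Qed.

Lemma coef_var (c : 'I_n) w : coef (var k c) w = ([:: c] == w)%:R.
Proof. exact: coef_mono. Qed.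

Lemma mono_neq0 (w : word) : mono k w != 0.
Proof.
apply/negP => /eqP e; have := coef_mono k w w; rewrite e mcoeff0 eqxx.
by move/esym/eqP; rewrite oner_eq0.
Qed.

Lemma lm_mono (w : word) : lm (mono k w) = w.
Proof.
apply: lm_eq; first by rewrite coef_mono eqxx oner_neq0.
by move=> w'; rewrite coef_mono; case: (eqVneq w w') => [->|_]; [left|rewrite eqxx].
Qed.

Lemma lm_supp_size (f : F) w : coef f w != 0 -> (size w <= size (lm f))%N.
Proof. by case/lm_max => [->//|/deglt_size]. Qed.

End LM.

Section Ideal.
Variables (k : fieldType) (n : nat).
Local Notation F := (freealg k n).
Local Notation word := (seq 'I_n).
Local Notation coef f w := (mcoeff (FMonom w) f).
Variable I : F -> Prop.
Hypothesis hI : is_ideal I.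

Lemma idl0 : I 0. Proof. by case: hI. Qed.
Lemma idlD f g : I f -> I g -> I (f + g). Proof. by case: hI => _ H _; apply: H. Qed.
Lemma idlM a b c : I b -> I (a * b * c). Proof. by case: hI => _ _ H; apply: H. Qed.
Lemma idlMl a b : I b -> I (a * b).
Proof. by move=> Hb; rewrite -[a * b]mulr1; apply: idlM. Qed.
Lemma idlMr b c : I b -> I (b * c).
Proof. by move=> Hb; rewrite -[b * c]mul1r mulrA; apply: idlM. Qed.
Lemma idlZ c f : I f -> I (c *: f).
Proof. by move=> Hf; rewrite -mul_malgC; apply: idlMl. Qed.
Lemma idlN f : I f -> I (- f).
Proof. by move=> Hf; rewrite -scaleN1r; apply: idlZ. Qed.
Lemma idlB f g : I f -> I g -> I (f - g).
Proof. by move=> Hf Hg; apply: idlD => //; apply: idlN. Qed.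
Lemma idl_sum (T : Type) (r : seq T) (P : pred T) (Fi : T -> F) :
  (forall i, P i -> I (Fi i)) -> I (\sum_(i <- r | P i) Fi i).
Proof.
move=> H; apply: (big_rec (fun x => I x)); first exact: idl0.
by move=> i x Pi Hx; apply: idlD => //; apply: H.
Qed.

Lemma flag_I j g : I g -> flag I j g.
Proof.
move=> Hg; exists g, (fun _ => 0); split => //.
by rewrite big1 ?addr0 // => i _; rewrite mulr0.
Qed.

Lemma flag_var j (c : 'I_n) d : (c < j)%N -> flag I j (var k c * d).
Proof.
move=> cj; exists 0, (fun i => if i == c then d else 0); split; first exact: idl0.
rewrite add0r (bigD1 c) //= eqxx big1 ?addr0 // => i /andP[_ /negPf ->].
by rewrite mulr0.
Qed.

Lemma flagD j f g : flag I j f -> flag I j g -> flag I j (f + g).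
Proof.
case=> [g1 [c1 [H1 ->]]] [g2 [c2 [H2 ->]]].
exists (g1 + g2), (fun i => c1 i + c2 i); split; first exact: idlD.
rewrite -!addrA; congr (_ + _); rewrite addrCA -big_split /=; congr (_ + _).
by apply: eq_bigr => i _; rewrite mulrDr.
Qed.




Lemma flagZ j a f : flag I j f -> flag I j (a *: f).
Proof.
case=> [g [c [H ->]]]; exists (a *: g), (fun i => a *: c i); split.
  exact: idlZ.
rewrite scalerDr scaler_sumr; congr (_ + _); apply: eq_bigr => i _.
by rewrite scalerAr_malg.
Qed.

Lemma flagN j f : flag I j f -> flag I j (- f).
Proof. by move=> Hf; rewrite -scaleN1r; apply: flagZ. Qed.

Lemma flagB j f g : flag I j f -> flag I j g -> flag I j (f - g).
Proof. by move=> Hf Hg; apply: flagD => //; apply: flagN. Qed.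

Lemma flag0 j : flag I j 0.
Proof. apply: flag_I; exact: idl0. Qed.

Lemma flag_sum j (T : Type) (r : seq T) (P : pred T) (Fi : T -> F) :
  (forall i, P i -> flag I j (Fi i)) -> flag I j (\sum_(i <- r | P i) Fi i).
Proof.
move=> H; apply: (big_rec (fun x => flag I j x)); first exact: flag0.
by move=> i x Pi Hx; apply: flagD => //; apply: H.
Qed.

Lemma flag_mono j j' f : (j <= j')%N -> flag I j f -> flag I j' f.
Proof.
move=> jj' [g [c [H ->]]]; apply: flagD; first exact: flag_I.
apply: flag_sum => i ij; apply: flag_var; exact: leq_trans ij jj'.
Qed.

Lemma flag_sumvar j (c : 'I_n -> F) : flag I j (\sum_(i < n | (i < j)%N) var k i * c i).
Proof. by apply: flag_sum => i ij; apply: flag_var. Qed.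

Lemma flagMr j f d : flag I j f -> flag I j (f * d).
Proof.
case=> [g [c [H ->]]]; rewrite mulrDl mulr_suml; apply: flagD.
  by apply: flag_I; apply: idlMr.
apply: flag_sum => i ij; rewrite -mulrA; exact: flag_var.
Qed.

End Ideal.

Section GB.
Variables (k : fieldType) (n : nat).
Local Notation F := (freealg k n).
Local Notation word := (seq 'I_n).
Local Notation coef f w := (mcoeff (FMonom w) f).
Variables (I G : F -> Prop).
Hypothesis hI : standard_ideal I.
Hypothesis hG : reduced_GB I G.

Lemma hIi : is_ideal I. Proof. by case: hI. Qed.

Lemma std_size g w : I g -> coef g w != 0 -> (2 <= size w)%N.
Proof. by case: hI => _ _ H Ig; rewrite mcoeff_neq0 => /(H _ Ig). Qed.

Lemma std_coef g w : I g -> (size w < 2)%N -> coef g w = 0.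
Proof.
move=> Ig sw; case: (eqVneq (coef g w) 0) => // /(std_size Ig).
by rewrite leqNgt sw.
Qed.

Lemma flag_nil j f : flag I j f -> coef f [::] = 0.
Proof.
case=> [g [c [Hg ->]]]; rewrite mcoeffD raddf_sum /= (std_coef Hg) // add0r.
by rewrite big1 // => i _; rewrite coef_varM_nil.
Qed.

Lemma flag_var_lt j (b : 'I_n) : flag I j (var k b) -> (b < j)%N.
Proof.
case=> [g [c [Hg e]]]; have := congr1 (mcoeff (FMonom [:: b])) e.
rewrite coef_var eqxx mcoeffD raddf_sum /= (std_coef Hg) // add0r.
case: (ltnP b j) => // jb.
rewrite big1 => [/eqP|i ij]; first by rewrite oner_eq0.
rewrite coef_varM_cons; case: eqP => // eib.
by move: ij; rewrite eib ltnNge jb.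
Qed.

Definition normal (w : word) := forall g, G g -> ~ wdivides (lm g) w.

Lemma gb_zero f : I f -> supp_in normal f -> f = 0.
Proof.
move=> If Hf; apply/eqP; apply/negP => /negP f0.
case: hG => _ _ H _; have [g Gg dv] := H f If f0.
exact: (Hf _ (lm_in f0) g Gg).
Qed.

Lemma G_I g : G g -> I g. Proof. by case: hG => H _ _ _; apply: H. Qed.
Lemma G_neq0 g : G g -> g != 0. Proof. by case: hG => _ H _ _ /H []. Qed.
Lemma G_lc g : G g -> coef g (lm g) = 1. Proof. by case: hG => _ H _ _ /H []. Qed.
Lemma G_lm_in g : G g -> coef g (lm g) != 0.
Proof. by move=> Gg; rewrite G_lc ?oner_neq0. Qed.
Lemma G_size_lm g : G g -> (2 <= size (lm g))%N.
Proof. by move=> Gg; apply: (std_size (G_I Gg)); apply: G_lm_in. Qed.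

Lemma G_red g g' m : G g -> G g' -> g <> g' -> coef g m != 0 -> ~ wdivides (lm g') m.
Proof. by case: hG => _ _ _ H Gg Gg' ne; rewrite mcoeff_neq0 => /(H _ _ Gg Gg' ne). Qed.

Lemma G_lower_lt g m : G g -> coef g m != 0 -> m != lm g -> deglt m (lm g).
Proof. by move=> Gg /lm_max [->|//]; rewrite eqxx. Qed.

Lemma G_lower_normal g m : G g -> coef g m != 0 -> m != lm g -> normal m.
Proof.
move=> Gg gm ne g' Gg' dv.
case: (classic (g = g')) => [e|ne']; last exact: (G_red Gg Gg' ne' gm dv).
rewrite -e in dv; have lt := G_lower_lt Gg gm ne.
have := wdiv_eq dv (deglt_size lt) => e'.
by rewrite e' eqxx in ne.
Qed.

Lemma G_dec g : G g ->
  supp_in (fun m => coef g m != 0 /\ m != lm g) (g - mono k (lm g)).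
Proof.
move=> Gg w; rewrite mcoeffB coef_mono.
case: (eqVneq (lm g) w) => [<-|ne]; first by rewrite G_lc // subrr eqxx.
by rewrite subr0 => ->; split => //; rewrite eq_sym.
Qed.

Lemma not_normal w : ~ normal w -> exists g, [/\ G g & exists u v, w = u ++ lm g ++ v].
Proof.
move=> H; apply: NNPP => H'; apply: H => g Gg [u [v e]]; apply: H'.
by exists g; split => //; exists u, v.
Qed.

Lemma reduce (P : word -> Prop) :
  (forall g u v m, G g -> P (u ++ lm g ++ v) -> coef g m != 0 -> m != lm g ->
     P (u ++ m ++ v)) ->
  forall f, supp_in P f ->
  exists r, supp_in (fun w => P w /\ normal w) r /\ I (f - r).
Proof.
move=> Pcl; have Ii := hIi.
apply: span_ind.
- by exists 0; split; [exact: supp_in0|rewrite subr0; exact: idl0].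
- move=> f g [r1 [H1 I1]] [r2 [H2 I2]]; exists (r1 + r2); split.
    exact: supp_inD.
  by rewrite opprD addrACA; apply: idlD.
- move=> c f [r [H1 I1]]; exists (c *: r); split; first exact: supp_inZ.
  by rewrite -scalerBr; apply: idlZ.
elim/deglt_ind => w IH Pw.
case: (classic (normal w)) => [nw|/not_normal [g [Gg [u [v ew]]]]].
  exists (mono k w); split; first exact: supp_in_mono.
  by rewrite subrr; exact: idl0.
have Q' : forall h, supp_in (fun m => coef g m != 0 /\ m != lm g) h ->
    exists r, supp_in (fun w => P w /\ normal w) r /\
      I (mono k u * h * mono k v - r).
  apply: span_ind.
  - by exists 0; split; [exact: supp_in0|rewrite mulr0 mul0r subr0; exact: idl0].
  - move=> f1 f2 [r1 [H1 I1]] [r2 [H2 I2]]; exists (r1 + r2); split.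
      exact: supp_inD.
    by rewrite mulrDr mulrDl opprD addrACA; apply: idlD.
  - move=> c f [r [H1 I1]]; exists (c *: r); split; first exact: supp_inZ.
    by rewrite -scalerAr_malg -scalerAl -scalerBr; apply: idlZ.
  move=> m [gm ne]; rewrite !mono_mul -catA.
  apply: IH; first by rewrite ew; apply: deglt_ctx; apply: G_lower_lt.
  by apply: (Pcl g) => //; rewrite -ew.
have [r' [Hr' Ir']] := Q' _ (G_dec Gg).
exists (- r'); split; first exact: supp_inN.
have E : mono k w - - r' =
   mono k u * g * mono k v - (mono k u * (g - mono k (lm g)) * mono k v - r').
  rewrite mulrBr mulrBl !mono_mul -catA -ew.
  by rewrite opprK !opprB addrA addrC addrA subrK addrC.
rewrite E; apply: (idlB Ii) => //; apply: (idlM Ii); exact: G_I.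
Qed.

End GB.

Lemma zmod_id1 (R : zmodType) (x y z : R) : y = x - (x - (y + z)) - z.
Proof. by rewrite opprB addrCA subrr addr0 addrK. Qed.

Section IItoI.
Variables (k : fieldType) (n : nat).
Local Notation F := (freealg k n).
Local Notation word := (seq 'I_n).
Local Notation coef f w := (mcoeff (FMonom w) f).
Variables (I G : F -> Prop).
Hypothesis hI : standard_ideal I.
Hypothesis hG : reduced_GB I G.
Hypothesis hP : PBW_lm_condition G.

Definition Lrel (i c : 'I_n) := exists2 g, G g & lm g = [:: i; c].

Lemma G_quad g m : G g -> coef g m != 0 -> size m = 2%N.
Proof. by case: hP => H _ Gg; rewrite mcoeff_neq0 => /(H _ Gg). Qed.

Lemma G_lm2 g : G g -> exists a b, lm g = [:: a; b].
Proof.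
move=> Gg; have := G_quad Gg (G_lm_in hG Gg).
by case: (lm g) => [|a [|b []]] //; exists a, b.
Qed.

Lemma size2 (m : word) : size m = 2%N -> exists a b, m = [:: a; b].
Proof. by case: m => [|a [|b []]] //; exists a, b. Qed.

Lemma Lrel_down (i b c : 'I_n) : (c < b)%N -> Lrel i b -> Lrel i c.
Proof. by case: hP => _ H cb [g Gg e]; apply: (H i b c cb); exists g. Qed.

Lemma exists_j_aux (i : 'I_n) s : forall t, (t + s = n)%N ->
  (forall c : 'I_n, (c < t)%N -> Lrel i c) ->
  exists2 j, (j <= n)%N & forall c : 'I_n, Lrel i c <-> (c < j)%N.
Proof.
elim: s => [|s IH] t ets Ht.
  move: ets; rewrite addn0 => ets.
  by exists n => // c; split => // _; apply: Ht; rewrite ets ltn_ord.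
have tn : (t < n)%N by rewrite -ets; lia.
case: (classic (Lrel i (Ordinal tn))) => [L|nL].
  apply: (IH t.+1); first by rewrite addSnnS.
  move=> c; rewrite ltnS leq_eqVlt => /orP[/eqP e|]; last exact: Ht.
  by have -> : c = Ordinal tn by apply: val_inj.
exists t; first exact: ltnW.
move=> c; split; last exact: Ht.
move=> Lc; case: (ltnP c t) => // tc; exfalso; apply: nL.
case: (eqVneq (c : nat) t) => [e|ne].
  by have <- : c = Ordinal tn by apply: val_inj.
by apply: (Lrel_down (b := c)) => //=; rewrite ltn_neqAle eq_sym ne tc.
Qed.

Lemma exists_j (i : 'I_n) :
  exists2 j, (j <= n)%N & forall c : 'I_n, Lrel i c <-> (c < j)%N.
Proof. by apply: (exists_j_aux (s := n) (t := 0)) => // c; rewrite ltn0. Qed.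

Let Ii := hIi hI.

Definition headge (j : nat) (w : word) :=
  match w with [::] => True | c :: _ => (j <= c)%N end.

Section FixI.
Variables (i : 'I_n) (j : nat).
Hypothesis hj : forall c : 'I_n, Lrel i c <-> (c < j)%N.

Lemma colon_back N : forall c : 'I_n, (c < N)%N -> (c < j)%N ->
  flag I i (var k i * var k c).
Proof.
elim: N => [//|N IH] c cN cj.
have [g Gg e] : Lrel i c by apply/hj.
rewrite mono_mul /= -e.
have -> : mono k (lm g) = g - (g - mono k (lm g)) by rewrite opprB addrC subrK.
apply: (flagB Ii); [apply: flag_I; exact: (G_I hG Gg)|].
apply: span_ind (G_dec hG Gg).
- exact: flag0.
- by move=> f1 f2; apply: (flagD Ii).
- by move=> a f; apply: (flagZ Ii).
move=> m [gm ne]; have lt := G_lower_lt Gg gm ne.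
have [a' [b' em]] := size2 (G_quad Gg gm); rewrite em e in lt.
rewrite em -cat1s -mono_mul.
case: (deglt2 lt) => [ai|[-> bc]].
  exact: (flag_var Ii (mono k [:: b']) ai).
apply: IH; last exact: ltn_trans bc cj.
exact: leq_trans bc _.
Qed.

Lemma colon_fwd a : flag I j a -> flag I i (var k i * a).
Proof.
case=> [g [c [Hg ->]]]; rewrite mulrDr mulr_sumr; apply: (flagD Ii).
  by apply: flag_I; apply: idlMl.
apply: (flag_sum Ii) => c' c'j; rewrite mulrA; apply: (flagMr Ii).
exact: (colon_back (N := n)).
Qed.

Lemma normal_cons w : normal G w -> headge j w -> normal G (i :: w).
Proof.
move=> nw hw g Gg [x [y e]]; have [a [b el]] := G_lm2 Gg; rewrite el in e.
case: x e => [|x0 x] /= [] ea ew.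
  have : Lrel i b by exists g; rewrite // el ea.
  by move/hj; rewrite ew /= in hw; rewrite ltnNge hw.
by apply: (nw g Gg); exists x, y; rewrite el.
Qed.

Definition Ph (w : word) := exists c w', w = c :: w' /\ (c < i)%N.

Lemma f1_zero f1 : supp_in (fun w => normal G w /\ headge j w) f1 ->
  flag I i (var k i * f1) -> f1 = 0.
Proof.
move=> Hf1 [g0 [d [Hg0 e]]].
set S := \sum_(_ < _ | _) _ in e.
have HS : supp_in Ph S.
  apply: supp_in_sum => c ci w; case: w => [|c' w]; first by rewrite coef_varM_nil eqxx.
  rewrite coef_varM_cons; case: (eqVneq c c') => [<- _|_]; last by rewrite eqxx.
  by exists c, w.
have Pcl : forall g u v m, G g -> Ph (u ++ lm g ++ v) -> coef g m != 0 ->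
    m != lm g -> Ph (u ++ m ++ v).
  move=> g u v m Gg [c [w' [ew ci]]] gm ne.
  case: u ew => [|x u] /= ew; last by exists x, (u ++ m ++ v); case: ew => ->.
  have [a [b el]] := G_lm2 Gg; have [a' [b' em]] := size2 (G_quad Gg gm).
  have lt := G_lower_lt Gg gm ne; rewrite el em in lt; rewrite el in ew.
  case: ew => ea _; rewrite em; exists a', (b' :: v); split => //.
  case: (deglt2 lt) => [aa|[-> _]]; last by rewrite ea.
  by rewrite ea in aa; exact: ltn_trans aa ci.
have [rS [HrS IrS]] := reduce hI hG Pcl HS.
have h0 : var k i * f1 - rS = 0.
  apply: (gb_zero hG).
    by rewrite e -addrA; apply: (idlD Ii).
  apply: supp_inB; last by move=> w /HrS [].
  move=> w; case: w => [|c w]; first by rewrite coef_varM_nil eqxx.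
  rewrite coef_varM_cons; case: (eqVneq i c) => [<-|_]; last by rewrite eqxx.
  by move/Hf1 => [nw hw]; apply: normal_cons.
apply: malg_ext => w; rewrite mcoeff0.
have := congr1 (mcoeff (FMonom (i :: w))) h0.
rewrite mcoeffB coef_varM_cons eqxx mcoeff0.
case: (eqVneq (coef rS (i :: w)) 0) => [->|/HrS [[c [w' [[ec _] ci]]] _]].
  by rewrite subr0.
by rewrite ec ltnn in ci.
Qed.

Definition Z0 : F -> Prop := fun x => x = 0.

Lemma Z0_ideal : is_ideal Z0.
Proof.
split; rewrite /Z0 //.
  by move=> a b -> ->; rewrite addr0.
by move=> a b c ->; rewrite mulr0 mul0r.
Qed.

Lemma split_normal r : supp_in (normal G) r ->
  exists f1 f2, [/\ r = f1 + f2, supp_in (fun w => normal G w /\ headge j w) f1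
                  & flag Z0 j f2].
Proof.
move: r; apply: span_ind.
- by exists 0, 0; split; [rewrite addr0|exact: supp_in0|exact: flag0 Z0_ideal _].
- move=> f g [f1 [f2 [-> H1 H2]]] [g1 [g2 [-> H1' H2']]].
  exists (f1 + g1), (f2 + g2); split; first by rewrite addrACA.
    exact: supp_inD.
  exact: flagD Z0_ideal _ _ _ _ _.
- move=> c f [f1 [f2 [-> H1 H2]]]; exists (c *: f1), (c *: f2); split.
  + by rewrite scalerDr.
  + exact: supp_inZ.
  + exact: flagZ Z0_ideal _ _ _ _.
move=> w nw; case: w nw => [|c w] nw.
  by exists (mono k [::]), 0; split; [rewrite addr0|exact: supp_in_mono|exact: flag0 Z0_ideal _].
case: (ltnP c j) => cj.
  exists 0, (var k c * mono k w); split; first by rewrite add0r mono_mul.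
    exact: supp_in0.
  exact: flag_var Z0_ideal _ _ _ _.
by exists (mono k (c :: w)), 0; split; [rewrite addr0|exact: supp_in_mono|exact: flag0 Z0_ideal _].
Qed.

Lemma colon_bwd a : flag I i (var k i * a) -> flag I j a.
Proof.
move=> Ha.
have [r [Hr Ir]] := reduce hI hG (P := fun _ => True) (fun _ _ _ _ _ _ _ _ => Logic.I) (@supp_in_all _ _ a).
have Hr' : supp_in (normal G) r by move=> w /Hr [].
have [f1 [f2 [er H1 H2]]] := split_normal Hr'.
case: H2 => [z [d [ez ef2]]]; rewrite /Z0 in ez; rewrite ez add0r in ef2.
have Hf2 : forall I', is_ideal I' -> flag I' j f2.
  by move=> I' hI'; rewrite ef2; apply: flag_sumvar.
have Hvf1 : flag I i (var k i * f1).
  have -> : var k i * f1 = var k i * a - var k i * (a - r) - var k i * f2.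
    rewrite er mulrBr !mulrDr; exact: zmod_id1.
  apply: (flagB Ii); [ |]; last first.
    rewrite ef2 mulr_sumr; apply: (flag_sum Ii) => c cj; rewrite mulrA.
    by apply: (flagMr Ii); apply: (colon_back (N := n)).
  apply: (flagB Ii); first exact: Ha.
  by apply: flag_I; apply: (idlMl Ii).
have f10 := f1_zero H1 Hvf1.
have -> : a = (a - r) + f2 by rewrite er f10 add0r subrK.
apply: (flagD Ii); [exact: flag_I|exact: Hf2].
Qed.

End FixI.

Theorem ii_to_i : initially_koszul I.
Proof.
move=> i; have [j jn hj] := exists_j i; exists j => // a; split.
  exact: colon_bwd.
exact: colon_fwd.
Qed.

End IItoI.

Section Decomp.
Variables (k : fieldType) (n : nat).
Local Notation F := (freealg k n).
Local Notation word := (seq 'I_n).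
Local Notation coef f w := (mcoeff (FMonom w) f).

Lemma decomp (P : word -> Prop) (f : F) : supp_in P f ->
  exists d : 'I_n -> F, f = coef f [::] *: mono k [::] + \sum_(c < n) var k c * d c
    /\ forall c, supp_in (fun w => P (c :: w)) (d c).
Proof.
move: f; apply: span_ind.
- exists (fun _ => 0); split; last by move=> c; exact: supp_in0.
  by rewrite mcoeff0 scale0r add0r big1 // => c _; rewrite mulr0.
- move=> f g [d1 [e1 H1]] [d2 [e2 H2]]; exists (fun c => d1 c + d2 c); split.
    rewrite mcoeffD scalerDl [in LHS]e1 [in LHS]e2 addrACA; congr (_ + _).
    rewrite -big_split /=.
by under [RHS]eq_bigr do rewrite mulrDr.
  by move=> c; apply: supp_inD.
- move=> a f [d [e H]]; exists (fun c => a *: d c); split.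
    rewrite mcoeffZ -scalerA [in LHS]e scalerDr scaler_sumr; congr (_ + _).
    rewrite scaler_sumr; by under [RHS]eq_bigr do rewrite -scalerAr_malg.
  by move=> c; apply: supp_inZ.
move=> w Pw; case: w Pw => [|c w] Pw.
  exists (fun _ => 0); split; last by move=> c; exact: supp_in0.
  by rewrite coef_mono eqxx scale1r big1 ?addr0 // => c _; rewrite mulr0.
exists (fun c' => if c' == c then mono k w else 0); split.
  rewrite coef_mono /= scale0r add0r (bigD1 c) //= eqxx big1 ?addr0.
    by rewrite mono_mul.
  by move=> c' /negPf ->; rewrite mulr0.
move=> c'; case: eqP => [->|_]; last exact: supp_in0.
by apply: supp_in_mono.
Qed.

Lemma coef_hcomp d (f : F) w :
  coef (hcomp d f) w = if size w == d then coef f w else 0.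
Proof.
rewrite /hcomp raddf_sum /= big_mkcond /=.
rewrite (eq_bigr (fun m => (if size w == d then f@_m else 0) *+ (m == FMonom w))).
  rewrite sum_coefU ?fset_uniq //.
  by case: (boolP (FMonom w \in msupp f)) => [//|/mcoeff_outdom ->]; case: ifP.
move=> m _; rewrite mcoeffU; case: (eqVneq m (FMonom w)) => [->|_].
  by case: ifP.
by case: ifP => _; rewrite mulr0n.
Qed.

End Decomp.

Section ItoII.
Variables (k : fieldType) (n : nat).
Local Notation F := (freealg k n).
Local Notation word := (seq 'I_n).
Local Notation coef f w := (mcoeff (FMonom w) f).
Variables (I G : F -> Prop).
Hypothesis hI : standard_ideal I.
Hypothesis hG : reduced_GB I G.
Hypothesis hK : initially_koszul I.
Let Ii := hIi hI.

Definition Qr (a b : 'I_n) := flag I a (var k a * var k b).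
Definition Npr (w : word) := forall x y a b, w = x ++ [:: a; b] ++ y -> ~ Qr a b.

Lemma Q_iff (i : 'I_n) j : (forall a, flag I i (var k i * a) <-> flag I j a) ->
  forall b : 'I_n, Qr i b <-> (b < j)%N.
Proof.
move=> hj b; rewrite /Qr hj; split; first exact: (flag_var_lt hI).
by move=> bj; rewrite -[var k b]mulr1; apply: (flag_var Ii).
Qed.

Lemma dec_zero mm (d : 'I_n -> F) :
  flag I mm (\sum_(c < n) var k c * d c) ->
  (forall c : 'I_n, (c < mm)%N -> d c = 0) ->
  (forall c : 'I_n, flag I c (var k c * d c) -> d c = 0) ->
  forall c, d c = 0.
Proof.
move=> Hh Hlt Hc.
suff H : forall s (c : 'I_n), (n - s <= c)%N -> d c = 0.
  by move=> c; apply: (H n); rewrite subnn.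
elim=> [|s IH] c cs; first by have := ltn_ord c; rewrite subn0 in cs; lia.
case: (leqP (n - s) c) => cs'; first exact: IH.
case: (ltnP c mm) => cm; first exact: Hlt.
apply: Hc.
rewrite (bigD1 c) //= in Hh.
have -> : var k c * d c = (var k c * d c + \sum_(i < n | i != c) var k i * d i)
    - \sum_(i < n | i != c) var k i * d i by rewrite addrK.
apply: (flagB Ii); first exact: (flag_mono Ii cm Hh).
apply: (flag_sum Ii) => i ic; case: (ltnP i c) => [lt|ge].
  exact: (flag_var Ii).
have -> : d i = 0.
  apply: IH; have ic' : (c : nat) != i by rewrite eq_sym.
  have lt : (c < i)%N by rewrite ltn_neqAle ic' ge.
  move: lt cs cs'; clear; lia.
by rewrite mulr0; apply: (flag0 Ii).
Qed.

Lemma C_zero L : forall mm (h : F),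
  supp_in (fun w => Npr w /\ (size w <= L)%N /\ headge mm w) h ->
  flag I mm h -> h = 0.
Proof.
elim: L => [|L IHL] mm h Hh Hf;
  have [d [eh Hd]] := decomp Hh; rewrite (flag_nil hI Hf) scale0r add0r in eh;
  rewrite eh in Hf.
- have d0 : forall c, d c = 0.
    by move=> c; apply: supp_none; apply: supp_in_impl (Hd c) => w [_ []].
  by rewrite eh big1 // => c _; rewrite d0 mulr0.
have d0 : forall c, d c = 0.
  apply: (dec_zero Hf).
    move=> c cm; apply: supp_none; apply: supp_in_impl (Hd c) => w [_ [_ /=]].
    by rewrite leqNgt cm.
  move=> c Hc; have [j _ hj] := hK c.
  have Hdc := proj1 (hj _) Hc.
  apply: (IHL j) => // w /Hd [Nw [sw _]]; split.
    by move=> x y a b ew; apply: (Nw (c :: x) y a b); rewrite ew.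
  split; first by [].
  case: w Nw sw => [|b y] Nw sw //=.
  case: (ltnP b j) => // bj; exfalso.
  apply: (Nw [::] y c b); first by [].
  apply/(Q_iff hj); exact: bj.
by rewrite eh big1 // => c _; rewrite d0 mulr0.
Qed.

Lemma Npr_zero h : I h -> supp_in Npr h -> h = 0.
Proof.
move=> Ih Hh; apply: (@C_zero (\max_(m <- msupp h) size (m : word)) 0).
  move=> w hw; split; first exact: Hh.
  split; last by case: w {hw}.
  rewrite mcoeff_neq0 in hw.
  exact: (@leq_bigmax_seq _ (msupp h : seq _) xpredT (fun m : {fmonom 'I_n} => size (m : word)) (FMonom w) hw).
exact: flag_I.
Qed.

Lemma coef_sumvar_ge (a : nat) (d : 'I_n -> F) (c' : 'I_n) w : (a <= c')%N ->
  coef (\sum_(c < n | (c < a)%N) var k c * d c) (c' :: w) = 0.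
Proof.
move=> ac; rewrite raddf_sum big1 //= => c ca; rewrite coef_varM_cons.
case: (eqVneq c c') => // e; rewrite -e in ac; move: ca ac; clear; lia.
Qed.

Lemma Q_lm (a b : 'I_n) : Qr a b -> exists2 g, G g & lm g = [:: a; b].
Proof.
case=> [g0 [d [Hg0 e]]].
set S := \sum_(_ < _ | _) _ in e.
have Ih : I (hcomp 2 g0) by case: hI => _ H _; apply: H.
have cf : forall w, coef (hcomp 2 g0) w =
    if size w == 2%N then coef (mono k [:: a; b]) w - coef S w else 0.
  move=> w; rewrite coef_hcomp; case: ifP => // _.
  have -> : g0 = var k a * var k b - S by rewrite e addrK.
  by rewrite mcoeffB mono_mul.
have h0 : coef (hcomp 2 g0) [:: a; b] != 0.
  by rewrite cf /= coef_mono eqxx coef_sumvar_ge // subr0 oner_neq0.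
have hh0 : hcomp 2 g0 != 0 by apply: contraNneq h0 => ->; rewrite mcoeff0.
have [g Gg dv] : exists2 g, G g & wdivides (lm g) (lm (hcomp 2 g0)).
  by case: hG => _ _ H _; apply: H.
have el : lm (hcomp 2 g0) = [:: a; b].
  apply: lm_eq => // w'; rewrite cf; case: ifP => [/eqP s|]; last by rewrite eqxx.
  have [x [y ew]] : exists x y, w' = [:: x; y] by case: w' s => [|x [|y []]] //; exists x, y.
  rewrite ew; case: (ltnP x a) => xa.
    by move=> _; right; rewrite /deglt /= xa.
  rewrite coef_sumvar_ge // subr0 coef_mono.
  by case: (eqVneq [:: a; b] [:: x; y]) => [->|_]; [left|rewrite eqxx].
rewrite el in dv; exists g => //; apply: wdiv_eq => //; exact: (G_size_lm hI hG Gg).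
Qed.

Lemma normal_Npr w : normal G w -> Npr w.
Proof.
move=> nw x y a b ew /Q_lm [g Gg el]; apply: (nw g Gg).
by exists x, y; rewrite el.
Qed.

Lemma G_lm_Q g : G g -> exists a b, lm g = [:: a; b] /\ Qr a b.
Proof.
move=> Gg; case: (classic (Npr (lm g))) => [Nl|nNl].
  exfalso; have g0 : g = 0.
    apply: Npr_zero; first exact: (G_I hG Gg).
    move=> w gw; case: (eqVneq w (lm g)) => [->//|ne].
    exact: normal_Npr (G_lower_normal hG Gg gw ne).
  by move: (G_neq0 hG Gg); rewrite g0 eqxx.
have [x [y [a [b [el Qab]]]]] : exists x y a b, lm g = x ++ [:: a; b] ++ y /\ Qr a b.
  apply: NNPP => H; apply: nNl => x y a b el Qab; apply: H.
  by exists x, y, a, b.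
have [g' Gg' el'] := Q_lm Qab.
case: (classic (g = g')) => [eg|ne].
  by exists a, b; split => //; rewrite eg.
exfalso; apply: (G_red hG Gg Gg' ne (G_lm_in hG Gg)).
by exists x, y; rewrite el'.
Qed.

Theorem i_to_ii : PBW_lm_condition G.
Proof.
split.
  move=> g Gg m; rewrite -mcoeff_neq0 -[m]fmK => gm.
  have [a [b [el _]]] := G_lm_Q Gg.
  have := std_size hI (G_I hG Gg) gm; have := lm_supp_size gm; rewrite el /=.
  lia.
move=> a b c cb [g Gg el]; have [a' [b' [el' Q']]] := G_lm_Q Gg.
rewrite el in el'; case: el' => <- <- in Q'.
have [j _ hj] := hK a.
have bj := proj1 (Q_iff hj b) Q'.
apply: Q_lm; apply/(Q_iff hj); exact: ltn_trans bj.
Qed.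

End ItoII.

Section LmIdeal.
Variables (k : fieldType) (n : nat).
Local Notation F := (freealg k n).
Local Notation word := (seq 'I_n).
Local Notation coef f w := (mcoeff (FMonom w) f).
Variables (I G : F -> Prop).
Hypothesis hI : standard_ideal I.
Hypothesis hG : reduced_GB I G.

Definition G' : F -> Prop := fun f => exists2 g, G g & f = mono k (lm g).
Definition Div (w : word) := exists g, G g /\ wdivides (lm g) w.

Lemma supp_prod (a b c : F) w : coef (a * b * c) w != 0 ->
  exists x m y, w = x ++ m ++ y /\ coef b m != 0.
Proof.
rewrite mcoeff_neq0 => /msuppM_le [k1 [k2 [k1in k2in e]]].
have [k3 [k4 [k3in k4in e']]] := msuppM_le k1in.
rewrite e' !mulmE in e.
exists k3, k4, k2; split; first by have := congr1 (@fmonom_val _) e; rewrite /= catA.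
by rewrite fmK mcoeff_neq0.
Qed.

Lemma coef_mono_neq0 (u w : word) : coef (mono k u) w != 0 -> w = u.
Proof. by rewrite coef_mono; case: (eqVneq u w) => [->//|_]; rewrite eqxx. Qed.



Lemma lmI_supp f : lm_ideal G f -> supp_in Div f.
Proof.
case=> [l [Hl ->]]; rewrite big_seq; apply: supp_in_sum => t tl w.
move=> /supp_prod [x [m [y [ew hm]]]].
have [g Gg et] := Hl t tl; rewrite et in hm; have em := coef_mono_neq0 hm.
by exists g; split => //; exists x, y; rewrite ew em.
Qed.

Lemma lmI_of_supp f : supp_in Div f -> lm_ideal G f.
Proof.
move: f; apply: span_ind.
- by exists [::]; split => //; rewrite big_nil.
- move=> f g [l1 [H1 ->]] [l2 [H2 ->]]; exists (l1 ++ l2); split.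
    move=> t; rewrite mem_cat => /orP[tl|tl]; [exact: H1 tl|exact: H2 tl].
  by rewrite big_cat.
- move=> c f [l [H ->]]; exists (map (fun t => ((c *: t.1.1, t.1.2), t.2)) l); split.
    move=> t /mapP [tt ttl ->] /=; exact: H ttl.
  by rewrite big_map scaler_sumr; apply: eq_bigr => t _; rewrite /= -!scalerAl.
move=> w [g [Gg [x [y ew]]]].
exists [:: ((mono k x, mono k (lm g)), mono k y)]; split.
  by move=> t; rewrite inE => /eqP -> /=; exists g.
by rewrite big_seq1 /= !mono_mul ew catA.
Qed.

Lemma lmI_ideal : is_ideal (lm_ideal G).
Proof.
split.
- by apply: lmI_of_supp; exact: supp_in0.
- move=> a b /lmI_supp Ha /lmI_supp Hb; apply: lmI_of_supp; exact: supp_inD.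
move=> a b c /lmI_supp Hb; apply: lmI_of_supp => w /supp_prod [x [m [y [ew hm]]]].
have [g [Gg dv]] := Hb _ hm; exists g; split => //.
by apply: wdiv_trans dv _; exists x, y.
Qed.

Lemma Div_size w : Div w -> (2 <= size w)%N.
Proof.
case=> g [Gg dv]; apply: leq_trans (wdiv_size dv); exact: (G_size_lm hI hG Gg).
Qed.

Lemma lmI_std : standard_ideal (lm_ideal G).
Proof.
split; first exact: lmI_ideal.
  move=> f d /lmI_supp Hf; apply: lmI_of_supp => w; rewrite coef_hcomp.
  by case: ifP => [_ /Hf//|_]; rewrite eqxx.
move=> f /lmI_supp Hf m; rewrite -mcoeff_neq0 -[m]fmK => /Hf; exact: Div_size.
Qed.

Lemma lmI_GB : reduced_GB (lm_ideal G) G'.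
Proof.
split.
- move=> g' [g Gg ->]; apply: lmI_of_supp => w /coef_mono_neq0 ->.
  by exists g; split => //; exact: wdiv_refl.
- move=> g' [g Gg ->]; split; first exact: mono_neq0.
  by rewrite /lc lm_mono coef_mono eqxx.
- move=> f /lmI_supp Hf f0; have [g [Gg dv]] := Hf _ (lm_in f0).
  by exists (mono k (lm g)); [exists g|rewrite lm_mono].
move=> g1 g2 [h1 Gh1 ->] [h2 Gh2 ->] ne m.
rewrite -mcoeff_neq0 -[m]fmK => /coef_mono_neq0 ->; rewrite lm_mono.
apply: (G_red hG Gh1 Gh2); last exact: (G_lm_in hG Gh1).
by move=> e; apply: ne; rewrite e.
Qed.

Lemma quad_mono (w : word) : quadratic (mono k w) <-> size w = 2%N.
Proof.
split.
  move=> H; apply: (H (FMonom w)); rewrite /mono msuppU1; exact: fset11.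
move=> s m; rewrite /mono msuppU1 inE => /eqP ->; exact: s.
Qed.

Lemma quad_G g : G g -> quadratic g <-> size (lm g) = 2%N.
Proof.
move=> Gg; split.
  move=> H; apply: (H (FMonom (lm g))); rewrite -mcoeff_neq0; exact: (G_lm_in hG Gg).
move=> s m; rewrite -mcoeff_neq0 -[m]fmK => gm.
have := std_size hI (G_I hG Gg) gm; have := lm_supp_size gm; rewrite s.
move=> h1 h2; apply/eqP; rewrite eqn_leq h1 h2.
by [].
Qed.

Lemma exG' (w : word) : (exists2 g', G' g' & lm g' = w) <-> (exists2 g, G g & lm g = w).
Proof.
split.
  by case=> g' [g Gg ->]; rewrite lm_mono => e; exists g.
by case=> g Gg e; exists (mono k (lm g)); [exists g|rewrite lm_mono].
Qed.

Lemma PBW_G' : PBW_lm_condition G <-> PBW_lm_condition G'.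
Proof.
split; case=> H1 H2; split.
- move=> g' [g Gg ->]; apply/quad_mono; apply/(quad_G Gg); exact: H1.
- move=> a b c cb /exG' H; apply/exG'; exact: H2 cb H.
- move=> g Gg; apply/(quad_G Gg); apply/quad_mono; apply: H1; by exists g.
- move=> a b c cb /exG' H; apply/exG'; exact: H2 cb H.
Qed.

End LmIdeal.

Theorem core (k : fieldType) (n : nat) (I G : freealg k n -> Prop) :
  standard_ideal I -> reduced_GB I G ->
  (initially_koszul I <-> PBW_lm_condition G).
Proof.
move=> hI hG; split => H.
  by apply: (i_to_ii (I := I)).
by apply: (ii_to_i (I := I) (G := G)).
Qed.

Theorem mainTheorem7 (k : fieldType) (n : nat)
    (I G : freealg k n -> Prop) :
  standard_ideal I -> reduced_GB I G ->
  (initially_koszul I <-> PBW_lm_condition G) /\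
  (initially_koszul I <-> initially_koszul (lm_ideal G)).
Proof.
move=> hI hG; split; first exact: core.
rewrite (core hI hG) (core (lmI_std hI hG) (lmI_GB hG)).
exact: (PBW_G' hI hG).
Qed.
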